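(* Let $v=v(z)=zM(z)$, where $M(z)$ is the Motzkin generating function (so $z=\frac{v}{1+v+v^2}$). Then $$\sum_{\tau:\ \mathrm{ht}(\tau)\ge2}\mathrm{ht}(\tau)\,z^{|\tau|}=-2v+\frac{2(1-v^2)}{v}\sum_{h\ge1}\frac{v^{2h}}{1-v^{2h}},$$ where the sum on the left runs over Retakh plane trees $\tau$ of height at least $2$, $|\tau|$ is the number of nodes and $\mathrm{ht}(\tau)$ the height. Consequently, for every integer $n\ge0$, $$\sum_{\substack{\tau:\ |\tau|=n+1\\ \mathrm{ht}(\tau)\ge2}}\mathrm{ht}(\tau)=-2M_n+2\sum_{h\ge1}d(h)\left[\binom{n,3}{n+2-2h}-2\binom{n,3}{n-2h}+\binom{n,3}{n-2-2h}\right],$$ where $M_n$ is the $n$-th Motzkin number, $d(h)$ is the number of positive divisors of $h$, and $\binom{n,3}{k}=[v^k](1+v+v^2)^n$ (which is $0$ for $k<0$).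
   Context: A Retakh plane tree is a plane (ordered rooted) tree in which every non-root leaf has depth $1$ or even depth (root depth $0$); the one-node tree is included. These correspond bijectively (a tree with $n+1$ nodes to a path of semilength $n$) to Dyck paths all of whose peaks are at level $1$ or at an even level. The height of a tree is the number of edges of a longest root-to-node path. $M(z)=\sum_n M_nz^n=\frac{1-z-\sqrt{1-2z-3z^2}}{2z^2}$. *)

(* Defs.v *)
From HB Require Import structures.
From mathcomp Require Import all_boot all_order all_algebra.
From Stdlib Require List.
Set Implicit Arguments. Unset Strict Implicit. Unset Printing Implicit Defensive.
Import Order.TTheory GRing.Theory Num.Theory.

Inductive ptree : Type := Node of seq ptree.

Fixpoint tsize (t : ptree) : nat :=
  let: Node ts := t in (sumn (map tsize ts)).+1.

Fixpoint theight (t : ptree) : nat :=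
  let: Node ts := t in
  match ts with
  | [::] => 0
  | _ => (foldr maxn 0 (map theight ts)).+1
  end.

(* leaf_ok d t : every leaf of t, where the root of t sits at depth d,
   has depth 1 or an even depth (depth 0 = the root itself, which is even). *)
Fixpoint leaf_ok (d : nat) (t : ptree) : bool :=
  let: Node ts := t in
  match ts with
  | [::] => (d == 1) || ~~ odd d
  | _ => all (fun c => leaf_ok d.+1 c) ts
  end.

(* Retakh plane tree: every non-root leaf has depth 1 or even depth
   (the one-node tree is included). *)
Definition retakh (t : ptree) : bool := leaf_ok 0 t.

Definition enumerates (P : ptree -> Prop) (s : seq ptree) : Prop :=
  List.NoDup s /\ (forall t, List.In t s <-> P t).

Definition RT2 (m : nat) (t : ptree) : Prop :=
  retakh t /\ tsize t = m /\ 2 <= theight t.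

(* M_0 = 1, M_{n+1} = M_n + sum_{k=0}^{n-1} M_k M_{n-1-k} *)
Fixpoint motzs (n : nat) : seq nat :=
  match n with
  | 0 => [:: 1]
  | n'.+1 => let s := motzs n' in
      rcons s (nth 0 s n' + \sum_(k < n') nth 0 s k * nth 0 s (n'.-1 - k))
  end.
Definition motzkin (n : nat) : nat := nth 0 (motzs n) n.

Local Open Scope ring_scope.
Definition fps := nat -> int.
Definition fps_const (c : int) : fps := fun n => if n is 0%N then c else 0.
Definition fps_add (f g : fps) : fps := fun n => f n + g n.
Definition fps_sub (f g : fps) : fps := fun n => f n - g n.
Definition fps_scale (c : int) (f : fps) : fps := fun n => c * f n.
Definition fps_mul (f g : fps) : fps :=
  fun n => \sum_(i < n.+1) f i * g (n - i)%N.
Definition fps_pow (f : fps) (k : nat) : fps := iter k (fps_mul f) (fps_const 1).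
(* multiplicative inverse of a series with constant term 1 *)
Fixpoint fps_inv_seq (f : fps) (n : nat) : seq int :=
  match n with
  | 0 => [:: 1]
  | n'.+1 => let s := fps_inv_seq f n' in
      rcons s (- \sum_(i < n'.+1) f (n'.+1 - i)%N * nth 0 s i)
  end.
Definition fps_inv (f : fps) : fps := fun n => nth 0 (fps_inv_seq f n) n.
(* infinite sum sum_{h>=1} F h, for a family whose h-th member has
   valuation >= h (so only h <= m contribute to the coefficient of z^m) *)
Definition fps_sum1 (F : nat -> fps) : fps :=
  fun m => \sum_(1 <= h < m.+2) F h m.

Definition vser : fps := fun n => if n is n'.+1 then (motzkin n')%:Z else 0.

(* -2v + 2(1-v^2)/v * sum_{h>=1} v^{2h}/(1-v^{2h}),
   with v^{2h}/v written as v^{2h-1} *)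
Definition rhs_series : fps :=
  fps_add (fps_scale (-2) vser)
    (fps_sum1 (fun h =>
       fps_scale 2 (fps_mul (fps_sub (fps_const 1) (fps_pow vser 2))
                            (fps_mul (fps_pow vser (2 * h - 1)%N)
                                     (fps_inv (fps_sub (fps_const 1) (fps_pow vser (2 * h)%N))))))).

Definition trinom (n : nat) (k : int) : int :=
  match k with
  | Posz k' => ((1 + 'X + 'X^2 : {poly int}) ^+ n)`_k'
  | Negz _ => 0
  end.

Definition ndiv (h : nat) : nat := size (divisors h).

(* Main.v *)
Require Import Defs.
From HB Require Import structures.
From mathcomp Require Import all_boot all_order all_algebra.
From Stdlib Require List.
From mathcomp Require Import boolp.
From mathcomp Require Import ring lra zify.
Import Order.TTheory GRing.Theory Num.Theory.

Module MB.
Set Implicit Arguments. Unset Strict Implicit. Unset Printing Implicit Defensive.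

HB.instance Definition _ := gen_eqMixin ptree.
HB.instance Definition _ := gen_choiceMixin ptree.

Section PInd.
Variable P : ptree -> Prop.
Hypothesis HP : forall ts, List.Forall P ts -> P (Node ts).
Fixpoint ptree_ind0 (t : ptree) : P t :=
  match t with
  | Node ts => HP (
     (fix F (l : seq ptree) : List.Forall P l :=
        match l with
        | [::] => List.Forall_nil P
        | x :: l' => List.Forall_cons x (ptree_ind0 x) (F l')
        end) ts)
  end.
End PInd.

Lemma ForallP (P : ptree -> Prop) ts : List.Forall P ts -> forall t, t \in ts -> P t.
Proof.
elim=> [//|x l Hx _ IH] t; rewrite inE => /orP [/eqP -> //|]; exact: IH.
Qed.

Lemma ptree_ind' (P : ptree -> Prop) :
  (forall ts, (forall t, t \in ts -> P t) -> P (Node ts)) -> forall t, P t.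
Proof. move=> H; apply: ptree_ind0 => ts Hf; apply: H; exact: ForallP. Qed.

Definition ok (d : nat) : bool := (d == 1) || ~~ odd d.

Lemma tsize_gt0 t : 0 < Defs.tsize t. Proof. by case: t. Qed.

Lemma foldr_max_le (s : seq nat) h : (foldr maxn 0 s <= h) = all (fun x => x <= h) s.
Proof. by elim: s => //= x s IH; rewrite geq_max IH. Qed.

Lemma ht_node_le ts h : (theight (Node ts) <= h.+1) = all (fun c => theight c <= h) ts.
Proof.
case: ts => //= c ts; rewrite ltnS geq_max foldr_max_le.
by rewrite all_map.
Qed.

Lemma ht_node0 ts : (theight (Node ts) <= 0) = (ts == [::]).
Proof. by case: ts. Qed.

Lemma ht_lt_size t : theight t < Defs.tsize t.
Proof.
elim/ptree_ind': t => ts IH; case: ts IH => //= c ts IH.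
rewrite ltnS gtn_max; apply/andP; split.
  have := IH c (mem_head _ _); lia.
have : all (fun x => theight x < Defs.tsize x) ts.
  by apply/allP => x Hx; apply: IH; rewrite inE Hx orbT.
elim: ts {IH} => /= [_|x ts IH /andP [Hx Hts]]; first by rewrite addn0 tsize_gt0.
rewrite gtn_max; apply/andP; split; first lia.
have := IH Hts; lia.
Qed.

Lemma leaf_ok_node d ts : leaf_ok d (Node ts) =
  if ts is [::] then ok d else all (leaf_ok d.+1) ts.
Proof. by case: ts. Qed.

Lemma ok_shift d : 2 <= d -> ok d.+2 = ok d.
Proof. case: d => [|[|d]] // _. by rewrite /ok /= negbK. Qed.

Lemma leaf_ok_shift t : forall d, 2 <= d -> leaf_ok d.+2 t = leaf_ok d t.
Proof.
elim/ptree_ind': t => ts IH d Hd; rewrite !leaf_ok_node; case: ts IH => [|c ts] IH.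
  exact: ok_shift.
apply: eq_in_all => x Hx; apply: IH => //; lia.
Qed.

Lemma max_attained (ts : seq ptree) : ts != [::] ->
  exists2 c, c \in ts & theight c = foldr maxn 0 (map theight ts).
Proof.
elim: ts => // c ts IH _; case: (ts =P [::]) => [->|/eqP Hne].
  by exists c; rewrite ?mem_head //= maxn0.
have [c' Hc' E] := IH Hne; rewrite /= -E.
case: (leqP (theight c') (theight c)) => H.
  by exists c; rewrite ?mem_head // (maxn_idPl H).
by exists c'; rewrite ?inE ?Hc' ?orbT // (maxn_idPr (ltnW H)).
Qed.

Lemma leaf_ok_deep t : forall d, leaf_ok d t -> ok (d + theight t).
Proof.
elim/ptree_ind': t => ts IH d; rewrite leaf_ok_node; case: ts IH => [|c ts] IH.
  by rewrite addn0.
move=> /allP Hall.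
have [c' Hc' E] := max_attained (isT : c :: ts != [::]).
have := IH c' Hc' d.+1 (Hall c' Hc'); rewrite E.
by rewrite /= addSn addnS.
Qed.

Lemma retakh_even t : retakh t -> 2 <= theight t -> ~~ odd (theight t).
Proof.
move=> /leaf_ok_deep H H2; move: H; rewrite /ok add0n.
by case/orP => // /eqP E; rewrite E in H2.
Qed.

Fixpoint gf (T : nat -> seq ptree) (fuel n : nat) : seq (seq ptree) :=
  if n is 0 then [:: [::]] else
  if fuel is fuel'.+1 then
    flatten [seq [seq t :: f | t <- T k, f <- gf T fuel' (n - k)] | k <- iota 1 n]
  else [::].

Fixpoint gtrees (h d n : nat) : seq ptree :=
  match h with
  | 0 => if (n == 1) && ok d then [:: Node [::]] else [::]
  | h'.+1 => if n is n'.+1 then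
      [seq Node f | f <- gf (gtrees h' d.+1) n' n' & (f != [::]) || ok d]
      else [::]
  end.

Lemma gfS T fuel n : gf T fuel.+1 n.+1 =
  flatten [seq [seq t :: f | t <- T k, f <- gf T fuel (n.+1 - k)] | k <- iota 1 n.+1].
Proof. by []. Qed.
Lemma gf0 T fuel : gf T fuel 0 = [:: [::]].
Proof. by case: fuel. Qed.

Lemma gf_fuel T n f1 f2 : n <= f1 -> n <= f2 -> gf T f1 n = gf T f2 n.
Proof.
elim: f1 n f2 => [|f1 IH] n f2 H1 H2.
  by move: H1; rewrite leqn0 => /eqP E; subst n; rewrite !gf0.
case: n H1 H2 => [|n] H1 H2; first by rewrite !gf0.
case: f2 H2 => [//|f2] H2; rewrite !gfS.
congr flatten; apply/eq_in_map => k; rewrite mem_iota => /andP [Hk1 Hk2].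
congr allpairs; apply: IH; lia.
Qed.

Section GF.
Variable T : nat -> seq ptree.
Hypothesis Tsize : forall k t, t \in T k -> Defs.tsize t = k.

Lemma mem_gf fuel n f : n <= fuel ->
  (f \in gf T fuel n) = all (fun t => t \in T (Defs.tsize t)) f &&
                        (sumn (map Defs.tsize f) == n).
Proof.
elim: fuel n f => [|fuel IH] n f Hn.
  move: Hn; rewrite leqn0 => /eqP -> /=; rewrite inE.
  by case: f => //= t f; rewrite addn_eq0 (negbTE (lt0n_neq0 (tsize_gt0 t))) andbF.
case: n Hn => [|n] Hn.
  by rewrite /= inE; case: f => //= t f; rewrite addn_eq0 (negbTE (lt0n_neq0 (tsize_gt0 t))) andbF.
rewrite gfS; apply/idP/idP.
  move=> /flattenP [s /mapP [k]]; rewrite mem_iota => /andP [Hk1 Hk2] -> /allpairsP [[t f'] [/= Ht Hf' ->]].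
  rewrite IH in Hf'; last by lia.
  move: Hf' => /andP [Hall /eqP Hs]; rewrite /= (Tsize Ht) Ht Hall /= Hs; apply/eqP; lia.
case: f => [|t f] //.
move=> /andP [/andP [Ht Hall] /eqP Hs]; rewrite /= in Hs.
apply/flattenP; exists [seq t0 :: f0 | t0 <- T (Defs.tsize t), f0 <- gf T fuel (n.+1 - Defs.tsize t)].
  apply/mapP; exists (Defs.tsize t) => //; rewrite mem_iota tsize_gt0 /=; lia.
apply/allpairsP; exists (t, f); split => //=.
rewrite IH; last by have := tsize_gt0 t; lia.
apply/andP; split; first exact: Hall.
apply/eqP; lia.
Qed.

Lemma uniq_flatten_blocks (B : nat -> seq (seq ptree)) (s : seq nat) :
  uniq s -> (forall k, k \in s -> uniq (B k)) ->
  (forall k1 k2 x, x \in B k1 -> x \in B k2 -> k1 = k2) ->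
  uniq (flatten [seq B k | k <- s]).
Proof.
move=> Us UB Dis; elim: s Us UB => //= k s IH /andP [Hk Us] UB.
rewrite cat_uniq UB ?mem_head // IH //; last by move=> k' Hk'; apply: UB; rewrite inE Hk' orbT.
rewrite andbT; apply/hasPn => x /flattenP [b /mapP [k' Hk' ->]] Hx.
apply/negP => Hx'; have E := Dis _ _ _ Hx Hx'; by move: Hk; rewrite -E Hk'.
Qed.

Hypothesis Tuniq : forall k, uniq (T k).

Lemma uniq_gf fuel n : n <= fuel -> uniq (gf T fuel n).
Proof.
elim: fuel n => [|fuel IH] n Hn; first by move: Hn; rewrite leqn0 => /eqP ->.
case: n Hn => [//|n] Hn; rewrite gfS.
apply: uniq_flatten_blocks; first exact: iota_uniq.
  move=> k; rewrite mem_iota => /andP [Hk1 Hk2]; apply: allpairs_uniq => //; first by apply: IH; lia.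
  by move=> [a b] [c d] _ _ /= [-> ->].
move=> k1 k2 x /allpairsP [[t f] [/= Ht _ ->]] /allpairsP [[t' f'] [/= Ht' _ [E _]]].
by rewrite -(Tsize Ht) -(Tsize Ht') E.
Qed.

Lemma size_gfS fuel n : n <= fuel ->
  size (gf T fuel.+1 n.+1) =
  \sum_(k < n.+1) size (T k.+1) * size (gf T (n - k) (n - k)).
Proof.
move=> Hn; rewrite gfS size_flatten /shape -map_comp sumnE big_map.
rewrite -[iota 1 n.+1]/(index_iota 1 n.+2) big_add1 /= big_mkord.
apply: eq_bigr => k _ /=; rewrite size_allpairs subSS.
congr (_ * size _); apply: gf_fuel => //; lia.
Qed.
End GF.

Lemma Node_inj : injective Node. Proof. by move=> a b []. Qed.

Lemma mem_gtrees h : forall d n t,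
  (t \in gtrees h d n) = [&& leaf_ok d t, theight t <= h & Defs.tsize t == n].
Proof.
elim: h => [|h IH] d n [ts].
  rewrite /= ht_node0; case: ts => [|c ts] /=.
    rewrite -/(ok d); case: (ok d); rewrite ?andbT ?andbF //=. 
    case: (n =P 1) => [->|/eqP Hn]; first by rewrite inE eqxx.
    by rewrite in_nil eq_sym (negbTE Hn).
  rewrite ?andbF; case: ifP => _ //=; rewrite inE; apply/negbTE.
  by apply/eqP => [[]].
case: n => [|n]; first by rewrite /= ?andbF.
have Tsz : forall k t, t \in gtrees h d.+1 k -> Defs.tsize t = k.
  by move=> k t; rewrite IH => /and3P [_ _ /eqP].
rewrite [gtrees _ _ _]/= mem_map; last exact: Node_inj.
rewrite mem_filter mem_gf // eqSS ht_node_le leaf_ok_node.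
have E : all (fun t => t \in gtrees h d.+1 (Defs.tsize t)) ts =
         all (leaf_ok d.+1) ts && all (fun c => theight c <= h) ts.
  rewrite -all_predI; apply: eq_all => c /=; by rewrite IH eqxx andbT.
rewrite E; case: ts {E} => [|c ts] /= //.
by rewrite !andbA.
Qed.

Lemma gtrees_size h d n t : t \in gtrees h d n -> Defs.tsize t = n.
Proof. by rewrite mem_gtrees => /and3P [_ _ /eqP]. Qed.

Lemma uniq_gtrees h : forall d n, uniq (gtrees h d n).
Proof.
elim: h => [|h IH] d n /=; first by case: ifP.
case: n => [//|n]; rewrite map_inj_uniq; last exact: Node_inj.
apply: filter_uniq; apply: uniq_gf => //.
exact: gtrees_size.
Qed.

Lemma gtrees_shift h : forall d, 2 <= d -> forall n, gtrees h d.+2 n = gtrees h d n.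
Proof.
elim: h => [|h IH] d Hd n /=; first by rewrite ok_shift.
case: n => [//|n]; rewrite ok_shift //.
have -> : gtrees h d.+3 = gtrees h d.+1 by apply: funext => k; apply: IH; lia.
by [].
Qed.

End MB.
Import MB.

Module MA.
Set Implicit Arguments. Unset Strict Implicit. Unset Printing Implicit Defensive.
Local Open Scope ring_scope.

Definition ser := nat -> int.
HB.instance Definition _ := gen_eqMixin ser.
HB.instance Definition _ := gen_choiceMixin ser.

Definition szero : ser := fun _ => 0.
Definition sopp (f : ser) : ser := fun n => - f n.
Definition sadd (f g : ser) : ser := fps_add f g.

Lemma ser_ext (f g : ser) : (forall n, f n = g n) -> f = g.
Proof. by move=> H; apply: funext. Qed.

Fact saddA : associative sadd.
Proof. by move=> f g h; apply: ser_ext => n; rewrite /sadd /fps_add addrA. Qed.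
Fact saddC : commutative sadd.
Proof. by move=> f g; apply: ser_ext => n; rewrite /sadd /fps_add addrC. Qed.
Fact sadd0 : left_id szero sadd.
Proof. by move=> f; apply: ser_ext => n; rewrite /sadd /fps_add add0r. Qed.
Fact saddN : left_inverse szero sopp sadd.
Proof. by move=> f; apply: ser_ext => n; rewrite /sadd /fps_add /sopp addNr. Qed.

HB.instance Definition _ := GRing.isZmodule.Build ser saddA saddC sadd0 saddN.

Definition sone : ser := fps_const 1.
Definition smul (f g : ser) : ser := fps_mul f g.

Lemma smul_rev (f g : ser) i :
  smul f g i = \sum_(j < i.+1) f (i - j)%N * g j.
Proof.
rewrite /smul /fps_mul (reindex_inj rev_ord_inj) /=.
by apply: eq_bigr => j _; rewrite subKn // -ltnS.
Qed.

Fact smulA : associative smul.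
Proof.
move=> p q r; apply: ser_ext=> i; rewrite {1}/smul /fps_mul smul_rev.
pose coef3 j k := p j * (q (i - j - k)%N * r k).
transitivity (\sum_(j < i.+1) \sum_(k < i.+1 | (k <= i - j)%N) coef3 j k).
  apply: eq_bigr => /= j _; rewrite smul_rev big_distrr /=.
  by rewrite (big_ord_narrow_leq (leq_subr _ _)).
rewrite (exchange_big_dep predT) //=; apply: eq_bigr => k _.
transitivity (\sum_(j < i.+1 | (j <= i - k)%N) coef3 j k).
  apply: eq_bigl => j; rewrite -ltnS -(ltnS j) -!subSn ?leq_ord //.
  by rewrite -subn_gt0 -(subn_gt0 j) -!subnDA addnC.
rewrite (big_ord_narrow_leq (leq_subr _ _)) /smul /fps_mul big_distrl /=.
by apply: eq_bigr => j _; rewrite /coef3 -!subnDA addnC mulrA.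
Qed.

Fact smulC : commutative smul.
Proof.
move=> f g; apply: ser_ext => i; rewrite smul_rev /smul /fps_mul.
by apply: eq_bigr => j _; rewrite mulrC.
Qed.

Fact smul1 : left_id sone smul.
Proof.
move=> f; apply: ser_ext => i; rewrite /smul /fps_mul big_ord_recl /= /sone /fps_const.
rewrite mul1r subn0 big1 ?addr0 // => j _; by rewrite mul0r.
Qed.

Fact smulDl : left_distributive smul sadd.
Proof.
move=> f g h; apply: ser_ext => i; rewrite /smul /sadd /fps_mul /fps_add -big_split /=.
by apply: eq_bigr => j _; rewrite mulrDl.
Qed.

Fact sone_neq0 : sone != szero.
Proof. apply/eqP => H; have := congr1 (fun f => f 0%N) H; by rewrite /sone /szero /fps_const. Qed.

HB.instance Definition _ := GRing.Zmodule_isComNzRing.Build ser smulA smulC smul1 smulDl sone_neq0.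

Lemma sermulE (f g : ser) : fps_mul f g = f * g. Proof. by []. Qed.
Lemma seraddE (f g : ser) : fps_add f g = f + g. Proof. by []. Qed.
Lemma seroneE : fps_const 1 = (1 : ser). Proof. by []. Qed.
Lemma sersubE (f g : ser) : fps_sub f g = f - g. Proof. by []. Qed.
Lemma serpowE (f : ser) k : fps_pow f k = f ^+ k.
Proof. elim: k => [|k IH] //=; by rewrite exprS -IH. Qed.
Lemma serD (f g : ser) n : (f + g) n = f n + g n. Proof. by []. Qed.
Lemma serN (f : ser) n : (- f) n = - f n. Proof. by []. Qed.
Lemma serB (f g : ser) n : (f - g) n = f n - g n. Proof. by []. Qed.
Lemma serM (f g : ser) n : (f * g) n = \sum_(i < n.+1) f i * g (n - i)%N. Proof. by []. Qed.
Lemma ser0 n : (0 : ser) n = 0. Proof. by []. Qed.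
Lemma ser1 n : (1 : ser) n = if n is 0%N then 1 else 0. Proof. by []. Qed.
Lemma serscaleE (c : int) (f : ser) : fps_scale c f = (fps_const c : ser) * f.
Proof.
apply: ser_ext => n; rewrite serM big_ord_recl /= subn0 big1 ?addr0 // => i _.
by rewrite /fps_const /=  mul0r.
Qed.
Lemma serM_rev (f g : ser) n : (f * g) n = \sum_(j < n.+1) f (n - j)%N * g j.
Proof. exact: smul_rev. Qed.

End MA.
Import MA.

Module MA2.
Set Implicit Arguments. Unset Strict Implicit. Unset Printing Implicit Defensive.
Local Open Scope ring_scope.

Lemma size_inv_seq f n : size (fps_inv_seq f n) = n.+1.
Proof. by elim: n => [|n IH] //=; rewrite size_rcons IH. Qed.

Lemma nth_inv_seq f n k : (k <= n)%N -> nth 0 (fps_inv_seq f n) k = fps_inv f k.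
Proof.
elim: n => [|n IH] Hk; first by move: Hk; rewrite leqn0 => /eqP ->.
rewrite /= nth_rcons size_inv_seq.
case: ltnP => Hk2; first by apply: IH.
have -> : k = n.+1 by apply/eqP; rewrite eqn_leq Hk Hk2.
by rewrite eqxx /fps_inv /= nth_rcons size_inv_seq ltnn eqxx.
Qed.

Lemma fps_invS f n : fps_inv f n.+1 =
  - \sum_(i < n.+1) f (n.+1 - i)%N * fps_inv f i.
Proof.
rewrite {1}/fps_inv /= nth_rcons size_inv_seq ltnn eqxx; congr (- _).
by apply: eq_bigr => i _; rewrite nth_inv_seq // -ltnS.
Qed.

Lemma mul_inv (f : ser) : f 0%N = 1 -> f * (fps_inv f : ser) = 1.
Proof.
move=> f0; apply: ser_ext => n; rewrite serM_rev ser1; case: n => [|n].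
  by rewrite big_ord1 f0 mul1r /fps_inv.
rewrite big_ord_recr /= subnn f0 mul1r fps_invS.
by rewrite addrC addNr.
Qed.

Definition valge (f : ser) (k : nat) := forall i, (i < k)%N -> f i = 0.

Lemma valgeM f g a b : valge f a -> valge g b -> valge (f * g) (a + b).
Proof.
move=> Hf Hg i Hi; rewrite serM big1 // => j _.
case: (ltnP j a) => Hj; first by rewrite Hf // mul0r.
rewrite Hg ?mulr0 //; have := ltn_ord j; lia.
Qed.

Lemma valgeX f a k : valge f a -> valge (f ^+ k) (a * k).
Proof.
move=> Hf; elim: k => [|k IH]; first by move=> i; rewrite muln0.
by rewrite exprS mulnS; apply: valgeM.
Qed.

Lemma valge_le f a b : (b <= a)%N -> valge f a -> valge f b.
Proof. move=> Hab H i Hi; apply: H; lia. Qed.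

Lemma valgeD f g a : valge f a -> valge g a -> valge (f + g) a.
Proof. by move=> Hf Hg i Hi; rewrite serD Hf ?Hg ?addr0. Qed.
Lemma valgeN f a : valge f a -> valge (- f) a.
Proof. by move=> Hf i Hi; rewrite serN Hf ?oppr0. Qed.
Lemma valgeB f g a : valge f a -> valge g a -> valge (f - g) a.
Proof. by move=> Hf Hg; apply: valgeD => //; apply: valgeN. Qed.
Lemma valgeMl f g a : valge f a -> valge (f * g) a.
Proof. by move=> Hf; rewrite -[a]addn0; apply: valgeM => // i. Qed.
Lemma valgeMr f g a : valge g a -> valge (f * g) a.
Proof. by move=> Hf; rewrite mulrC; apply: valgeMl. Qed.

Definition sz : ser := fun n => if n == 1%N then 1 else 0.

Lemma szM_S (f : ser) n : (sz * f) n.+1 = f n.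
Proof.
rewrite serM big_ord_recl /= big_ord_recl /= big1 ?addr0.
  by rewrite /sz /= mul0r add0r mul1r subSS subn0.
by move=> i _; rewrite /sz /= mul0r.
Qed.
Lemma szM_0 (f : ser) : (sz * f) 0%N = 0.
Proof. by rewrite serM big_ord1 /sz /= mul0r. Qed.
Lemma valge_sz : valge sz 1. Proof. by move=> i; rewrite ltnS leqn0 => /eqP ->. Qed.

Lemma size_motzs n : size (motzs n) = n.+1.
Proof. by elim: n => [|n IH] //=; rewrite size_rcons IH. Qed.

Lemma nth_motzs n k : (k <= n)%N -> nth 0%N (motzs n) k = motzkin k.
Proof.
elim: n => [|n IH] Hk; first by move: Hk; rewrite leqn0 => /eqP ->.
rewrite /= nth_rcons size_motzs.
case: ltnP => Hk2; first by apply: IH.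
have -> : k = n.+1 by apply/eqP; rewrite eqn_leq Hk Hk2.
by rewrite eqxx /motzkin /= nth_rcons size_motzs ltnn eqxx.
Qed.

Lemma motzkinS n : motzkin n.+1 =
  (motzkin n + \sum_(k < n) motzkin k * motzkin (n.-1 - k))%N.
Proof.
rewrite {1}/motzkin /= nth_rcons size_motzs ltnn eqxx nth_motzs //.
congr (_ + _)%N; apply: eq_bigr => k _; rewrite !nth_motzs // ?(leq_trans (leq_subr _ _) (leq_pred _)) //; exact: ltnW.
Qed.

Definition v : ser := vser.
Definition phi : ser := 1 + v + v ^+ 2.

Lemma valge_v : valge v 1. Proof. by move=> i; rewrite ltnS leqn0 => /eqP ->. Qed.

Lemma v_eq : v = sz * phi.
Proof.
apply: ser_ext => n; case: n => [|n]; first by rewrite szM_0.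
rewrite szM_S /phi !serD ser1 expr2.
case: n => [|n]; first by rewrite /v /vser /= /motzkin /= serM big_ord1.
rewrite add0r /v /vser motzkinS PoszD; congr (_ + _).
rewrite serM big_ord_recl /= big_ord_recr /= subnn /= mul0r mulr0 add0r addr0.
rewrite (big_morph Posz PoszD (erefl _)).
apply: eq_bigr => i _; rewrite /bump /= add1n PoszM.
have -> : (n.+1 - i.+1 = (n.-1 - i).+1)%N by case: i => i /= Hi; case: (n) Hi => //= n0 Hi; rewrite subSS subSn.
by [].
Qed.

End MA2.
Import MA2.

Module MC.
Set Implicit Arguments. Unset Strict Implicit. Unset Printing Implicit Defensive.
Local Open Scope ring_scope.

Definition Dq (q : ser) : ser := (1 + v) * (1 - v * q).
Definition Nq (q : ser) : ser := v * (1 - q).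

Lemma Hv0 : sz * phi - v = 0.
Proof. by rewrite -v_eq subrr. Qed.

Lemma L_O Ea Ob q : Ea * Dq q = Nq q -> Ob * (1 - Ea) = sz * Ea ->
  Ob * (1 - v ^+ 2 * q) = sz * Nq q.
Proof.
move=> H1 H2; apply/eqP; rewrite -subr_eq0.
have -> : Ob * (1 - v ^+ 2 * q) - sz * Nq q =
  Dq q * (Ob * (1 - Ea) - sz * Ea) + (Ob + sz) * (Ea * Dq q - Nq q)
  by rewrite /Dq /Nq; ring.
by rewrite H1 H2 !subrr !mulr0 addr0.
Qed.

Lemma L_E Ob Ec q : Ob * (1 - v ^+ 2 * q) = sz * Nq q -> Ec * (1 - Ob) = sz ->
  Ec * Dq (v ^+ 2 * q) = Nq (v ^+ 2 * q).
Proof.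
move=> e1 H3; apply/eqP; rewrite -subr_eq0.
have -> : Ec * Dq (v ^+ 2 * q) - Nq (v ^+ 2 * q) =
  phi * (1 - v ^+ 2 * q) * (Ec * (1 - Ob) - sz)
  + (Ec * v * (1 - q) + (1 - v ^+ 2 * q)) * (sz * phi - v)
  + Ec * phi * (Ob * (1 - v ^+ 2 * q) - sz * Nq q)
  by rewrite /Dq /Nq /phi; ring.
by rewrite e1 H3 Hv0 !subrr !mulr0 !addr0.
Qed.

Lemma L_G1 Ea G1 q : Ea * Dq q = Nq q -> G1 * (1 - Ea) = sz ->
  G1 * (1 - v ^+ 2 * q) = sz * Dq q.
Proof.
move=> H1 H2; apply/eqP; rewrite -subr_eq0.
have -> : G1 * (1 - v ^+ 2 * q) - sz * Dq q =
  Dq q * (G1 * (1 - Ea) - sz) + G1 * (Ea * Dq q - Nq q)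
  by rewrite /Dq /Nq; ring.
by rewrite H1 H2 !subrr !mulr0 addr0.
Qed.

Lemma L_G0 G1 G0 q : G1 * (1 - v ^+ 2 * q) = sz * Dq q -> G0 * (1 - G1) = sz ->
  G0 * (1 - v ^+ 4 * q) = v * (1 - v ^+ 2 * q).
Proof.
move=> f1 H; apply/eqP; rewrite -subr_eq0.
have -> : G0 * (1 - v ^+ 4 * q) - v * (1 - v ^+ 2 * q) =
  phi * (1 - v ^+ 2 * q) * (G0 * (1 - G1) - sz)
  + (G0 * Dq q + (1 - v ^+ 2 * q)) * (sz * phi - v)
  + G0 * phi * (G1 * (1 - v ^+ 2 * q) - sz * Dq q)
  by rewrite /Dq /Nq /phi; ring.
by rewrite f1 H Hv0 !subrr !mulr0 !addr0.
Qed.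

Section Closed.
Variables E O G1 G0 : nat -> ser.
Hypothesis E0 : E 0%N = sz.
Hypothesis O0 : O 0%N = 0.
Hypothesis ES : forall h, E h.+1 * (1 - O h) = sz.
Hypothesis OS : forall h, O h.+1 * (1 - E h) = sz * E h.
Hypothesis G10 : G1 0%N = sz.
Hypothesis G1S : forall h, G1 h.+1 * (1 - E h) = sz.
Hypothesis G0S : forall h, G0 h.+1 * (1 - G1 h) = sz.

Lemma E_closed k : E k.*2 * Dq (v ^+ k.*2.+2) = Nq (v ^+ k.*2.+2) /\
                   E k.*2.+1 * Dq (v ^+ k.*2.+2) = Nq (v ^+ k.*2.+2).
Proof.
have base : sz * Dq (v ^+ 2) = Nq (v ^+ 2).
  apply/eqP; rewrite -subr_eq0.
  have -> : sz * Dq (v ^+ 2) - Nq (v ^+ 2) = (1 - v ^+ 2) * (sz * phi - v)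
    by rewrite /Dq /Nq /phi; ring.
  by rewrite Hv0 mulr0.
elim: k => [|k [IH1 IH2]].
  split; first by rewrite E0.
  by have := ES 0; rewrite O0 subr0 mulr1 => ->.
have -> : v ^+ (k.+1).*2.+2 = v ^+ 2 * v ^+ k.*2.+2 by rewrite -exprD.
split.
  apply: (L_E _ (ES _)); exact: (L_O IH1 (OS _)).
apply: (L_E _ (ES _)); exact: (L_O IH2 (OS _)).
Qed.

Lemma S_closed j : G0 j.*2.+1 * (1 - v ^+ j.*2.+4) = v * (1 - v ^+ j.*2.+2).
Proof.
case: j => [|k].
  have f1 : G1 0%N * (1 - v ^+ 2 * 1) = sz * Dq 1 by rewrite G10 /Dq; ring.
  by have := L_G0 f1 (G0S 0); rewrite !mulr1.
have f1 := L_G1 (proj2 (E_closed k)) (G1S _).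
have := L_G0 f1 (G0S _).
by rewrite -!exprD.
Qed.
End Closed.

Lemma S_diff (S : ser) j : S * (1 - v ^+ j.*2.+4) = v * (1 - v ^+ j.*2.+2) ->
  (v - S) * (1 - v ^+ j.*2.+4) = (1 - v ^+ 2) * v ^+ j.*2.+3.
Proof.
move=> H; rewrite mulrBl H.
have -> : v ^+ j.*2.+4 = v ^+ 2 * v ^+ j.*2.+2 by rewrite -exprD.
have -> : v ^+ j.*2.+3 = v * v ^+ j.*2.+2 by rewrite -exprS.
ring.
Qed.

End MC.
Import MC.

Module MD.
Set Implicit Arguments. Unset Strict Implicit. Unset Printing Implicit Defensive.
Local Open Scope ring_scope.

Definition tser (h d : nat) : ser := fun n => (size (gtrees h d n))%:Z.
Definition fser (h d : nat) : ser := fun n => (size (gf (gtrees h d) n n))%:Z.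

Lemma gtrees_0 h d : gtrees h d 0 = [::].
Proof. by case: h. Qed.

Lemma fser_eq h d : fser h d * (1 - tser h d) = 1.
Proof.
suff E : fser h d = 1 + tser h d * fser h d.
  by rewrite mulrBr mulr1 {1}E [fser h d * _]mulrC addrK.
apply: ser_ext => n; rewrite serD serM ser1; case: n => [|n].
  by rewrite big_ord1 /tser gtrees_0 /= mul0r addr0.
rewrite add0r big_ord_recl /tser gtrees_0 /= mul0r add0r /fser.
rewrite (size_gfS _ (leqnn n)).
rewrite (big_morph Posz PoszD (erefl _)); apply: eq_bigr => k _.
by rewrite PoszM /bump /= add1n subSS.
Qed.

Lemma tser0 d : tser 0 d = if ok d then sz else 0.
Proof.
apply: ser_ext => n; rewrite /tser /=; case: (ok d); rewrite ?andbT ?andbF /sz //.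
by case: (n == 1%N).
Qed.

Lemma tserS_ok h d : ok d -> tser h.+1 d = sz * fser h d.+1.
Proof.
move=> Hok; apply: ser_ext => n; case: n => [|n]; first by rewrite szM_0.
rewrite szM_S /tser /fser /= size_map.
have -> : [seq f <- gf (gtrees h d.+1) n n | (f != [::]) || ok d] =
          gf (gtrees h d.+1) n n.
  by apply/all_filterP/allP => f _; rewrite Hok orbT.
by [].
Qed.

Lemma tserS_nok h d : ~~ ok d -> tser h.+1 d = sz * (fser h d.+1 - 1).
Proof.
move=> Hok; apply: ser_ext => n; case: n => [|n]; first by rewrite szM_0.
rewrite szM_S /tser /fser serB ser1 /= size_map (negbTE Hok).
case: n => [|n]; first by [].
have -> : [seq f <- gf (gtrees h d.+1) n.+1 n.+1 | (f != [::]) || false] =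
          gf (gtrees h d.+1) n.+1 n.+1.
  apply/all_filterP/allP => f; rewrite (mem_gf (@gtrees_size h d.+1)) //.
  by case: f.
by rewrite subr0.
Qed.

Lemma tser_shift h d : (2 <= d)%N -> tser h d.+2 = tser h d.
Proof. by move=> Hd; apply: ser_ext => n; rewrite /tser gtrees_shift. Qed.

Lemma fser_ok h d : ok d -> tser h.+1 d * (1 - tser h d.+1) = sz.
Proof. by move=> Hok; rewrite tserS_ok // -mulrA fser_eq mulr1. Qed.

Lemma S_tree j : tser j.*2.+1 0 * (1 - v ^+ j.*2.+4) = v * (1 - v ^+ j.*2.+2).
Proof.
apply: (@S_closed (fun h => tser h 2) (fun h => tser h 3) (fun h => tser h 1) (fun h => tser h 0)).
- by rewrite tser0.
- by rewrite tser0.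
- by move=> h; apply: fser_ok.
- move=> h; rewrite tserS_nok // -(tser_shift h (isT : (2 <= 2)%N)).
  have := fser_eq h 4; set F := fser h 4; set T := tser h 4 => E.
  by rewrite -mulrA mulrBl E mul1r opprB addrC subrK.
- by rewrite tser0.
- by move=> h; apply: fser_ok.
- by move=> h; apply: fser_ok.
Qed.

End MD.
Import MD.

Module ME.
Set Implicit Arguments. Unset Strict Implicit. Unset Printing Implicit Defensive.

Lemma In_mem (T : eqType) (x : T) s : List.In x s <-> x \in s.
Proof.
elim: s => [|y s IH] /=; first by split.
rewrite inE; split.
  by case=> [->|/IH ->]; rewrite ?eqxx ?orbT.
by case/orP => [/eqP ->|/IH]; [left|right].
Qed.

Lemma NoDup_uniq (T : eqType) (s : seq T) : List.NoDup s <-> uniq s.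
Proof.
elim: s => [|x s IH] /=; first by split => // _; constructor.
split.
  move=> H; inversion H; subst; apply/andP; split; last by apply/IH.
  by apply/negP => /In_mem.
move=> /andP [Hx Hs]; constructor; last by apply/IH.
by move=> /In_mem Hx'; rewrite Hx' in Hx.
Qed.

Definition Lall m := gtrees m.*2.+1 0 m.

Lemma mem_Lall m t : (t \in Lall m) = retakh t && (Defs.tsize t == m).
Proof.
rewrite /Lall mem_gtrees /retakh; case: (Defs.tsize t =P m) => [E|]; last by rewrite !andbF.
have := ht_lt_size t; rewrite E => H; rewrite (_ : theight t <= m.*2.+1) //; lia.
Qed.

Definition s2 m := [seq t <- Lall m | 2 <= theight t].

Lemma s2_enum m : enumerates (RT2 m) (s2 m).
Proof.
split; first by apply/NoDup_uniq; rewrite filter_uniq // /Lall uniq_gtrees.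
move=> t; rewrite In_mem mem_filter mem_Lall /RT2; split.
  by move=> /andP [H2 /andP [Hr /eqP Hs]].
by move=> [Hr [Hs H2]]; rewrite H2 Hr Hs eqxx.
Qed.

Lemma enum_perm m s : enumerates (RT2 m) s -> perm_eq s (s2 m).
Proof.
move=> [Hnd Hin]; have [Hnd' Hin'] := s2_enum m.
apply: uniq_perm; try by apply/NoDup_uniq.
move=> t; apply/idP/idP => /In_mem H; apply/In_mem.
  by apply/Hin'/Hin.
by apply/Hin/Hin'.
Qed.

Lemma sum_lt m x : (\sum_(j < m) (j < x : nat) = minn m x)%N.
Proof.
elim: m => [|m IH]; first by rewrite big_ord0 min0n.
rewrite big_ord_recr /= IH; case: (ltnP m x) => H; lia.
Qed.

Lemma ht_decomp m t : t \in Lall m ->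
  ((2 <= theight t) * theight t = 2 * \sum_(j < m) (j.*2.+1 < theight t : nat))%N.
Proof.
rewrite mem_Lall => /andP [Hr /eqP Hs].
have Hlt := ht_lt_size t; rewrite Hs in Hlt.
case: (leqP 2 (theight t)) => H2 /=.
  have Hev := retakh_even Hr H2.
  have E : theight t = (theight t)./2.*2 by rewrite -{1}(odd_double_half (theight t)) (negbTE Hev).
  rewrite mul1n E; set x := (theight t)./2.
  have key : forall j, (j.*2.+1 < x.*2) = (j < x).
    by move=> j; apply/idP/idP; lia.
  under eq_bigr => j _ do rewrite key.
  rewrite sum_lt; move: Hlt; rewrite E; lia.
rewrite mul0n big1 // => j _; apply/eqP; rewrite eqb0 -leqNgt; lia.
Qed.

Lemma count_le m j : count (fun t => theight t <= j) (Lall m) = size (gtrees j 0 m).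
Proof.
rewrite -size_filter; apply: perm_size; apply: uniq_perm.
- by rewrite filter_uniq // /Lall uniq_gtrees.
- exact: uniq_gtrees.
move=> t; rewrite mem_filter mem_Lall mem_gtrees /retakh.
by case: (theight t <= j); rewrite ?andbF ?andbT.
Qed.

Lemma sum_count (T : Type) (P : pred T) (s : seq T) :
  (\sum_(t <- s) (P t : nat) = count P s)%N.
Proof. by elim: s => [|x s IH]; rewrite ?big_nil ?big_cons ?IH. Qed.

Local Open Scope ring_scope.

Lemma vpow_valge k : valge (v ^+ k) k.
Proof. by have := @valgeX v 1 k valge_v; rewrite mul1n. Qed.

Lemma S_coef j n : (n < j.*2.+3)%N -> tser j.*2.+1 0 n = v n.
Proof.
move=> Hn; have E := S_tree j.
have E2 : tser j.*2.+1 0 = v - v * v ^+ j.*2.+2 + tser j.*2.+1 0 * v ^+ j.*2.+4.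
  apply/eqP; rewrite -subr_eq0; apply/eqP.
  transitivity (tser j.*2.+1 0 * (1 - v ^+ j.*2.+4) - v * (1 - v ^+ j.*2.+2)); first ring.
  by rewrite E subrr.
rewrite E2 !serD serN.
rewrite (@valgeM v (v ^+ j.*2.+2) 1 j.*2.+2 valge_v (@vpow_valge j.*2.+2) n); last lia.
rewrite (@valgeMr (tser j.*2.+1 0) _ j.*2.+4 (@vpow_valge j.*2.+4) n); last lia.
by rewrite oppr0 !addr0.
Qed.

Lemma sumht_nat m s : enumerates (RT2 m) s ->
  (\sum_(t <- s) theight t =
  2 * \sum_(j < m) (size (Lall m) - size (gtrees j.*2.+1 0 m)))%N.
Proof.
move=> Hs; rewrite (perm_big _ (enum_perm Hs)) /s2 big_filter big_mkcond /=.
rewrite (eq_big_seq (fun t => 2 * \sum_(j < m) (j.*2.+1 < theight t : nat))%N); last first.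
  by move=> t Ht; rewrite -ht_decomp //; case: ifP => _; rewrite ?mul1n ?mul0n.
rewrite -big_distrr /= exchange_big /=; congr (_ * _)%N.
apply: eq_bigr => j _.
rewrite sum_count -(count_predC (fun t => (theight t <= j.*2.+1)%N) (Lall m)).
rewrite count_le addKn.
apply: eq_count => t /=; by rewrite ltnNge.
Qed.

Lemma sumht m s : enumerates (RT2 m) s ->
  ((\sum_(t <- s) theight t)%N)%:Z =
  2 * \sum_(j < m) (v m - tser j.*2.+1 0 m).
Proof.
move=> Hs; rewrite (sumht_nat Hs).
have Hsz : size (Lall m) = v m :> int.
  by rewrite -(S_coef (j := m)); [|lia].
rewrite PoszM; congr (_ * _).
rewrite (big_morph Posz PoszD (erefl _)); apply: eq_bigr => j _.
rewrite -Hsz /tser subzn //.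
rewrite -count_le; exact: count_size.
Qed.

End ME.
Import ME.

Module MF.
Set Implicit Arguments. Unset Strict Implicit. Unset Printing Implicit Defensive.
Local Open Scope ring_scope.

Definition term (h : nat) : ser :=
  (1 - v ^+ 2) * (v ^+ (2 * h - 1)%N * (fps_inv (1 - v ^+ (2 * h)%N) : ser)).

Lemma one_sub_vpow0 k : (0 < k)%N -> (1 - v ^+ k) 0%N = 1.
Proof. by move=> Hk; rewrite serB ser1 (@vpow_valge k) // subr0. Qed.

Lemma rhs_expand m : rhs_series m = -2 * v m + \sum_(1 <= h < m.+2) 2 * term h m.
Proof.
rewrite /rhs_series /fps_add /fps_scale /fps_sum1; congr (_ + _).
apply: eq_bigr => h _; rewrite /term.
by rewrite !serpowE !sersubE seroneE !sermulE.
Qed.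

Lemma term1 : term 1 = v.
Proof.
rewrite /term muln1 /= expr1 mulrCA mul_inv ?mulr1 //.
exact: one_sub_vpow0.
Qed.

Lemma termS j : term j.+2 = v - tser j.*2.+1 0.
Proof.
have E := S_diff (S_tree j).
have Hw : (2 * j.+2)%N = j.*2.+4 by rewrite -mul2n; lia.
have Hw2 : (2 * j.+2 - 1)%N = j.*2.+3 by rewrite -mul2n; lia.
rewrite /term Hw2 Hw mulrA -E -mulrA mul_inv ?mulr1 //.
exact: one_sub_vpow0.
Qed.

Lemma rhs_coef m : rhs_series m = 2 * \sum_(j < m) (v m - tser j.*2.+1 0 m).
Proof.
rewrite rhs_expand big_nat_recl // term1 addrA.
have -> : -2 * v m + 2 * v m = 0 by ring.
rewrite add0r big_add1 /= big_mkord -big_distrr /=; congr (_ * _).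
by apply: eq_bigr => j _; rewrite termS serB.
Qed.

Theorem part2 m s : enumerates (RT2 m) s ->
  ((\sum_(t <- s) theight t)%N)%:Z = rhs_series m.
Proof. by move=> Hs; rewrite (sumht Hs) rhs_coef. Qed.

End MF.
Import MF.

Module MG.
Set Implicit Arguments. Unset Strict Implicit. Unset Printing Implicit Defensive.
Local Open Scope ring_scope.

Definition tp : {poly int} := 1 + 'X + 'X^2.

Lemma trinom0 (k : int) : trinom 0 k = (k == 0)%:R.
Proof.
case: k => [k|k] //=; rewrite expr0 coef1.
by case: k.
Qed.

Lemma coef_tp_mul (p : {poly int}) k :
  (p * tp)`_k.+2 = p`_k.+2 + p`_k.+1 + p`_k.
Proof.
by rewrite /tp !mulrDr mulr1 !coefD coefMX coefMXn /= subn2.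
Qed.

Lemma trinomS n (k : int) :
  trinom n.+1 k = trinom n k + trinom n (k - 1) + trinom n (k - 2).
Proof.
rewrite /trinom exprSr -/tp; case: k => [k|k].
  case: k => [|[|k]].
  - by rewrite {2}/tp !mulrDr mulr1 !coefD coefMX coefMXn /=.
  - have -> : (Posz 1 - 1) = Posz 0 by [].
    have -> : (Posz 1 - 2) = Negz 0 by [].
    by rewrite {2}/tp !mulrDr mulr1 !coefD coefMX coefMXn /= addr0.
  have -> : (Posz k.+2 - 1) = Posz k.+1 by lia.
  have -> : (Posz k.+2 - 2) = Posz k by lia.
  by rewrite coef_tp_mul.
have -> : (Negz k - 1) = Negz k.+1 by rewrite !NegzE; lia.
have -> : (Negz k - 2) = Negz k.+2 by rewrite !NegzE; lia.
by rewrite !addr0.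
Qed.

Lemma trinom_sym n : forall k : int, trinom n k = trinom n (2 * n%:Z - k).
Proof.
elim: n => [|n IH] k.
  by rewrite !trinom0 mulr0 add0r oppr_eq0.
rewrite !trinomS.
have e1 : trinom n (2 * n.+1%:Z - k) = trinom n (k - 2).
  by rewrite IH; congr trinom; lia.
have e2 : trinom n (2 * n.+1%:Z - k - 1) = trinom n (k - 1).
  by rewrite IH; congr trinom; lia.
have e3 : trinom n (2 * n.+1%:Z - k - 2) = trinom n k.
  by rewrite IH; congr trinom; lia.
rewrite e1 e2 e3; ring.
Qed.

Definition Dc (n j : nat) : int :=
  trinom n (n%:Z + 1 - j%:Z) - trinom n (n%:Z - 1 - j%:Z).

Lemma vpow_rec j n : (v ^+ j.+1) n.+1 = (v ^+ j) n + (v ^+ j.+1) n + (v ^+ j.+2) n.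
Proof.
have E : v ^+ j.+1 = sz * (v ^+ j + v ^+ j.+1 + v ^+ j.+2).
  rewrite exprS {1}v_eq /phi -mulrA; congr (_ * _); rewrite !exprS; ring.
by rewrite {1}E szM_S !serD.
Qed.

Lemma vpv k : valge (v ^+ k) k.
Proof. by have := @valgeX v 1 k valge_v; rewrite mul1n. Qed.

Lemma cvj n : forall j, (v ^+ j) n.+1 = Dc n j.
Proof.
elim: n => [|n IH] j.
  rewrite /Dc !trinom0.
  case: j => [|[|j]].
  - by rewrite expr0 ser1.
  - by rewrite expr1 /v /vser /motzkin.
  rewrite (@vpv j.+2) //.
case: j => [|j].
  rewrite expr0 ser1 /Dc trinom_sym; apply/esym/eqP; rewrite subr_eq0; apply/eqP.
  by congr trinom; lia.
rewrite vpow_rec !IH /Dc !trinomS.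
have e : forall a b : int, a = b -> trinom n a = trinom n b by move=> a b ->.
rewrite (e (n.+1%:Z + 1 - j.+1%:Z) (n%:Z - j%:Z + (1))); last lia.
rewrite (e (n.+1%:Z + 1 - j.+1%:Z - 1) (n%:Z - j%:Z + (0))); last lia.
rewrite (e (n.+1%:Z + 1 - j.+1%:Z - 2) (n%:Z - j%:Z + (-1))); last lia.
rewrite (e (n.+1%:Z - 1 - j.+1%:Z) (n%:Z - j%:Z + (-1))); last lia.
rewrite (e (n.+1%:Z - 1 - j.+1%:Z - 1) (n%:Z - j%:Z + (-2))); last lia.
rewrite (e (n.+1%:Z - 1 - j.+1%:Z - 2) (n%:Z - j%:Z + (-3))); last lia.
rewrite (e (n%:Z + 1 - j%:Z) (n%:Z - j%:Z + (1))); last lia.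
rewrite (e (n%:Z - 1 - j%:Z) (n%:Z - j%:Z + (-1))); last lia.
rewrite (e (n%:Z + 1 - j.+1%:Z) (n%:Z - j%:Z + (0))); last lia.
rewrite (e (n%:Z - 1 - j.+1%:Z) (n%:Z - j%:Z + (-2))); last lia.
rewrite (e (n%:Z + 1 - j.+2%:Z) (n%:Z - j%:Z + (-1))); last lia.
rewrite (e (n%:Z - 1 - j.+2%:Z) (n%:Z - j%:Z + (-3))); last lia.
ring.
Qed.

End MG.
Import MG.

Module MH.
Set Implicit Arguments. Unset Strict Implicit. Unset Printing Implicit Defensive.
Local Open Scope ring_scope.

Section Div.
Variable a : nat -> int.

Lemma block_sum h T : (0 < h)%N ->
  \sum_(t < T) a (h * t.+1)%N =
  \sum_(1 <= k < (h * T).+1) (if (h %| k)%N then a k else 0).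
Proof.
move=> Hh; elim: T => [|T IH].
  by rewrite big_ord0 muln0 big_geq.
rewrite big_ord_recr /= IH [in RHS](@big_cat_nat _ _ _ (h * T).+1) /=; last 2 first.
- by [].
- by rewrite ltnS; lia.
congr (_ + _).
rewrite big_nat_recr /=; last by rewrite mulnS; lia.
rewrite dvdn_mulr // big1_seq ?add0r //.
move=> k /andP [_]; rewrite mem_index_iota => /andP [Hk1 Hk2].
case: ifP => // Hd; exfalso.
have Hd' : (h %| k - h * T)%N by rewrite dvdn_subr ?dvdn_mulr //; lia.
have := dvdn_leq _ Hd'; rewrite mulnS in Hk2; move: Hk1 Hk2; lia.
Qed.

Variable K : nat.
Hypothesis aK : forall k, (K < k)%N -> a k = 0.

Lemma ndiv_count k : (0 < k)%N -> (k <= K)%N ->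
  ndiv k = count (fun h => h %| k)%N (index_iota 1 K.+1).
Proof.
move=> Hk HkK; rewrite /ndiv -size_filter; apply: perm_size; apply: uniq_perm.
- exact: divisors_uniq.
- by rewrite filter_uniq // iota_uniq.
move=> x; rewrite mem_filter mem_index_iota -dvdn_divisors //.
case Hx: (x %| k)%N => //=; apply/esym.
have := dvdn_leq Hk Hx; case: x Hx => [|x] Hx /=.
  by rewrite dvd0n in Hx; move: Hx Hk; case: (k) => //.
lia.
Qed.

Lemma div_sum :
  \sum_(1 <= h < K.+1) \sum_(t < K) a (h * t.+1)%N =
  \sum_(1 <= k < K.+1) (ndiv k)%:Z * a k.
Proof.
rewrite big_nat_cond.
rewrite (eq_bigr (fun h => \sum_(1 <= k < K.+1) (if (h %| k)%N then a k else 0))); last first.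
  move=> h /andP [/andP [Hh1 _] _].
  rewrite block_sum // [LHS](@big_cat_nat _ _ _ K.+1) /=; last 2 first.
  - by [].
  - by rewrite ltnS leq_pmull.
  rewrite [X in _ + X]big1_seq ?addr0 // => k /andP [_]; rewrite mem_index_iota => /andP [Hk _].
  by rewrite aK //; case: ifP.
rewrite -big_nat_cond exchange_big_nat /=.
rewrite big_nat_cond [RHS]big_nat_cond; apply: eq_bigr => k /andP [/andP [Hk1 Hk2] _].
rewrite ndiv_count // -sum1_count (big_morph Posz PoszD (erefl _)) big_distrl /= [RHS]big_mkcond /=.
apply: eq_bigr => h _; by case: ifP; rewrite ?mul1r ?mul0r.
Qed.
End Div.

End MH.
Import MH.

Module MI.
Set Implicit Arguments. Unset Strict Implicit. Unset Printing Implicit Defensive.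
Local Open Scope ring_scope.

Lemma ser_sum T (F : nat -> ser) n : (\sum_(t < T) F t) n = \sum_(t < T) F t n.
Proof.
elim: T => [|T IH]; first by rewrite !big_ord0.
by rewrite !big_ord_recr /= -IH.
Qed.

Lemma geom_trunc (w : ser) T : (1 - w) 0%N = 1 ->
  (fps_inv (1 - w) : ser) = \sum_(t < T) w ^+ t + w ^+ T * fps_inv (1 - w).
Proof.
move=> H0; set g : ser := fps_inv (1 - w).
have Hg : (1 - w) * g = 1 by apply: mul_inv.
have Hs : (1 - w) * \sum_(t < T) w ^+ t = 1 - w ^+ T.
  elim: T => [|T IH]; first by rewrite big_ord0 expr0 mulr0 subrr.
  by rewrite big_ord_recr mulrDr IH exprS; ring.
transitivity (g * ((1 - w) * \sum_(t < T) w ^+ t + w ^+ T)).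
  by rewrite Hs subrK mulr1.
by rewrite mulrDr mulrA [g * _]mulrC Hg mul1r mulrC.
Qed.

Definition acoef (N k : nat) : int := ((1 - v ^+ 2) * v ^+ (2 * k - 1)%N) N.

Lemma term_expand h N : (0 < h)%N ->
  term h N = \sum_(t < N.+1) acoef N (h * t.+1)%N.
Proof.
move=> Hh; rewrite /term (geom_trunc N.+1); last first.
  by apply: one_sub_vpow0; lia.
rewrite mulrDr mulrDr serD.
rewrite [X in _ + X](_ : _ = 0); last first.
  apply: (@valgeMr _ _ (2 * h * N.+1)%N); last by nia.
  apply: valgeMr; apply: valgeMl.
  by rewrite -exprM; apply: vpv.
rewrite addr0 !big_distrr; etransitivity; first exact: (ser_sum N.+1 (fun t => (1 - v ^+ 2) * (v ^+ (2 * h - 1) * v ^+ (2 * h) ^+ t)) N).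
apply: eq_bigr => t _ /=.
rewrite /acoef -exprM -exprD; congr (((1 - v ^+ 2) * v ^+ _) N); nia.
Qed.

Lemma acoef_zero N k : (N < 2 * k - 1)%N -> acoef N k = 0.
Proof. by move=> H; rewrite /acoef; apply: valgeMr; first apply: vpv. Qed.

Lemma acoef_bracket n k : (0 < k)%N ->
  acoef n.+1 k = trinom n (n%:Z + 2 - 2 * k%:Z) - 2 * trinom n (n%:Z - 2 * k%:Z)
                 + trinom n (n%:Z - 2 - 2 * k%:Z).
Proof.
move=> Hk; rewrite /acoef mulrBl mul1r -exprD serB !cvj /Dc.
have e : forall a b : int, a = b -> trinom n a = trinom n b by move=> a b ->.
rewrite (e (n%:Z + 1 - (2 * k - 1)%N%:Z) (n%:Z + 2 - 2 * k%:Z)); last lia.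
rewrite (e (n%:Z - 1 - (2 * k - 1)%N%:Z) (n%:Z - 2 * k%:Z)); last lia.
rewrite (e (n%:Z + 1 - (2 + (2 * k - 1))%N%:Z) (n%:Z - 2 * k%:Z)); last lia.
rewrite (e (n%:Z - 1 - (2 + (2 * k - 1))%N%:Z) (n%:Z - 2 - 2 * k%:Z)); last lia.
ring.
Qed.

Lemma rhs_part3 n : rhs_series n.+1 =
       - 2 * (motzkin n)%:Z
       + 2 * \sum_(1 <= h < n.+3)
               (ndiv h)%:Z * (trinom n (n%:Z + 2 - 2 * h%:Z)
                              - 2 * trinom n (n%:Z - 2 * h%:Z)
                              + trinom n (n%:Z - 2 - 2 * h%:Z)).
Proof.
rewrite rhs_expand -big_distrr /=; congr (_ + _ * _).
transitivity (\sum_(1 <= h < n.+3) \sum_(t < n.+2) acoef n.+1 (h * t.+1)%N).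
  apply: eq_big_nat => h /andP [Hh _]; exact: term_expand.
rewrite (div_sum (K := n.+2)); last first.
  move=> k Hk; apply: acoef_zero; lia.
apply: eq_big_nat => k /andP [Hk _].
by rewrite acoef_bracket.
Qed.

End MI.
Import MI.

Local Open Scope ring_scope.

Theorem mainTheorem4 :
  (forall m : nat, exists s : seq ptree, enumerates (RT2 m) s) /\
  (forall (m : nat) (s : seq ptree), enumerates (RT2 m) s ->
     ((\sum_(t <- s) theight t)%N)%:Z = rhs_series m) /\
  (forall (n : nat) (s : seq ptree), enumerates (RT2 n.+1) s ->
     ((\sum_(t <- s) theight t)%N)%:Z =
       - 2 * (motzkin n)%:Z
       + 2 * \sum_(1 <= h < n.+3)
               (ndiv h)%:Z * (trinom n (n%:Z + 2 - 2 * h%:Z)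
                              - 2 * trinom n (n%:Z - 2 * h%:Z)
                              + trinom n (n%:Z - 2 - 2 * h%:Z))).
Proof.
split; first by move=> m; exists (s2 m); exact: s2_enum.
split; first by move=> m s Hs; exact: part2 Hs.
by move=> n s Hs; rewrite (part2 Hs) rhs_part3.
Qed.
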